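(* Let $\mathfrak{g}$ be a real nilpotent Lie algebra with a (possibly indefinite) metric whose Ricci operator satisfies $\operatorname{Ric}=\lambda\,\mathrm{id}+D$ with $\lambda\in\mathbb{R}$ and $D$ a derivation of $\mathfrak{g}$. Then $\operatorname{Tr}D^2=-\lambda\operatorname{Tr}D$ and $\operatorname{Tr}\operatorname{Ric}^2=\lambda\operatorname{Tr}\operatorname{Ric}$.
   Context: A metric on a Lie algebra is a nondegenerate symmetric bilinear form, possibly indefinite. The Ricci operator is that of the corresponding left-invariant pseudo-Riemannian metric on the simply connected Lie group, evaluated at the identity. *)

(* Defs.v *)
From HB Require Import structures.
From mathcomp Require Import all_boot all_order all_algebra.
From mathcomp Require Import reals.
Set Implicit Arguments. Unset Strict Implicit. Unset Printing Implicit Defensive.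
Import Order.TTheory GRing.Theory Num.Theory.
Local Open Scope ring_scope.

Section LieDefs.
Variables (R : realType) (n : nat).
Notation V := 'rV[R]_n.

Definition is_lie_bracket (br : V -> V -> V) : Prop :=
  [/\ (forall (a : R) (x y z : V), br (a *: x + y) z = a *: br x z + br y z),
      (forall x y : V, br x y = - br y x) &
      (forall x y z : V, br x (br y z) + br y (br z x) + br z (br x y) = 0)].

(* nilpotent: for some k, all iterated brackets [x1,[x2,...,[xk,y]]] vanish,
   i.e. the lower central series term g^(k+1) is zero *)
Definition lie_nilpotent (br : V -> V -> V) : Prop :=
  exists k : nat, forall (xs : seq V) (y : V), size xs = k -> foldr br y xs = 0.

(* metric: nondegenerate symmetric bilinear form, given by its Gram matrix *)
Definition is_metric (G : 'M[R]_n) : Prop := G^T = G /\ G \in unitmx.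

Definition ip (G : 'M[R]_n) (u v : V) : R := (u *m G *m v^T) 0 0.

Definition evec (k : 'I_n) : V := delta_mx 0 k.

(* Levi-Civita connection of the left-invariant metric (Koszul formula):
   2 <nabla_X Y, Z> = <[X,Y],Z> - <[Y,Z],X> + <[Z,X],Y> *)
Definition nabla (br : V -> V -> V) (G : 'M[R]_n) (X Y : V) : V :=
  (2%:R^-1) *: ((\row_k (ip G (br X Y) (evec k) - ip G (br Y (evec k)) X
                        + ip G (br (evec k) X) Y)) *m invmx G).

Definition curv (br : V -> V -> V) (G : 'M[R]_n) (X Y Z : V) : V :=
  nabla br G X (nabla br G Y Z) - nabla br G Y (nabla br G X Z)
  - nabla br G (br X Y) Z.

Definition ric (br : V -> V -> V) (G : 'M[R]_n) (Y Z : V) : R :=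
  \sum_i (curv br G (evec i) Y Z) 0 i.

(* Ricci operator: <Ric Y, Z> = ric(Y,Z); acting on row vectors Y |-> Y *m Ric *)
Definition ricci_op (br : V -> V -> V) (G : 'M[R]_n) : 'M[R]_n :=
  (\matrix_(a, b) ric br G (evec a) (evec b)) *m invmx G.

Definition is_derivation (br : V -> V -> V) (D : 'M[R]_n) : Prop :=
  forall x y : V, br x y *m D = br (x *m D) y + br x (y *m D).

End LieDefs.

(* Main.v *)
Require Import Defs.
From HB Require Import structures.
From mathcomp Require Import all_boot all_order all_algebra.
From mathcomp Require Import reals.
From mathcomp Require Import ring lra.
Set Implicit Arguments. Unset Strict Implicit. Unset Printing Implicit Defensive.
Import Order.TTheory GRing.Theory Num.Theory.
Local Open Scope ring_scope.


Lemma tr_nilp (F : fieldType) m (A : 'M[F]_m) k : A ^+ k = 0 -> \tr A = 0.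
Proof.
case: m A => [|m] A Ak; first by rewrite /mxtrace big_ord0.
pose B := map_mx (@polyC F) A.
pose X : 'M[{poly F}]_m.+1 := 'X%:M.
have cXB : GRing.comm X B by rewrite /GRing.comm -!mulmxE scalar_mxC.
have BX j : B ^+ j = map_mx (@polyC F) (A ^+ j).
  elim: j => [|j IH]; first by rewrite !expr0 map_mx1.
  by rewrite !exprSr IH -!mulmxE map_mxM.
have := subrXX_comm k cXB; rewrite BX Ak map_mx0 subr0 => E.
have H : char_poly A %| ('X - 0%:P) ^+ (k * m.+1).
  rewrite polyC0 subr0 exprM -det_scalar.
  have -> : (('X ^+ k)%:M : 'M[{poly F}]_m.+1) = X ^+ k.
    by rewrite /X; elim: (k) => [|j IH]; rewrite ?expr0 // exprS [in RHS]exprS -IH -mulmxE -scalar_mxM.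
  by rewrite E detM dvdp_mulr.
case/dvdp_exp_XsubCP: H => j _.
rewrite eqp_monic ?char_poly_monic ?monic_exp ?monicXsubC // => /eqP cE.
have := char_poly_trace A (ltn0Sn m).
rewrite cE polyC0 subr0 coefXn.
have : size (char_poly A) = m.+2 by rewrite size_char_poly.
rewrite cE polyC0 subr0 size_polyXn => -[->] /=.
by rewrite eqn_leq ltnn andbF => /esym/eqP; rewrite oppr_eq0 => /eqP.
Qed.

Section Main.
Variables (R : realType) (n : nat) (br : 'rV[R]_n -> 'rV[R]_n -> 'rV[R]_n) (G : 'M[R]_n).
Local Notation V := 'rV[R]_n.
Hypothesis Hl : forall (a : R) (x y z : V), br (a *: x + y) z = a *: br x z + br y z.
Hypothesis Has : forall x y : V, br x y = - br y x.
Hypothesis HGs : G^T = G.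
Hypothesis HGu : G \in unitmx.
Local Notation e := (@evec R n).
Local Notation Gi := (invmx G).

Definition linR (f : V -> R) := forall a x y, f (a *: x + y) = a * f x + f y.
Definition linV (m p : nat) (f : V -> 'M[R]_(m, p)) :=
  forall a x y, f (a *: x + y) = a *: f x + f y.

Lemma linR_sum f (Hf : linR f) I (r : seq I) (P : pred I) (c : I -> R) (v : I -> V) :
  f (\sum_(i <- r | P i) c i *: v i) = \sum_(i <- r | P i) c i * f (v i).
Proof.
have f0 : f 0 = 0.
  by have := Hf 1 0 0; rewrite scale1r addr0 mul1r -{1}(addr0 (f 0)) => /addrI.
apply: (big_rec2 (fun x y => f x = y)) => [//|i x y _ <-]; exact: Hf.
Qed.

Lemma linV_sum m p (f : V -> 'M[R]_(m, p)) (Hf : linV f) I (r : seq I) (P : pred I) (c : I -> R) (v : I -> V) :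
  f (\sum_(i <- r | P i) c i *: v i) = \sum_(i <- r | P i) c i *: f (v i).
Proof.
have f0 : f 0 = 0.
  by have := Hf 1 0 0; rewrite !scale1r addr0 -{1}(addr0 (f 0)) => /addrI.
apply: (big_rec2 (fun x y => f x = y)) => [//|i x y _ <-]; exact: Hf.
Qed.

Lemma evecM d (M : 'M[R]_n) a : (e d *m M) 0 a = M d a.
Proof. by rewrite /evec -rowE mxE. Qed.

Lemma row_dec (x : V) : x = \sum_i x 0 i *: e i.
Proof. exact: row_sum_delta. Qed.

Lemma evecM_dec d (M : 'M[R]_n) : e d *m M = \sum_a M d a *: e a.
Proof. by rewrite {1}(row_dec (e d *m M)); apply: eq_bigr => a _; rewrite evecM. Qed.

Lemma br0l z : br 0 z = 0.
Proof. by have := Hl 1 0 0 z; rewrite !scale1r addr0 -{1}(addr0 (br 0 z)) => /addrI/esym. Qed.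
Lemma brDl x y z : br (x + y) z = br x z + br y z.
Proof. by rewrite -{1}(scale1r x) Hl scale1r. Qed.
Lemma brZl a x z : br (a *: x) z = a *: br x z.
Proof. by rewrite -(addr0 (a *: x)) Hl br0l addr0. Qed.
Lemma br0r z : br z 0 = 0.
Proof. by rewrite Has br0l oppr0. Qed.
Lemma brDr x y z : br z (x + y) = br z x + br z y.
Proof. by rewrite Has brDl opprD -!Has. Qed.
Lemma brZr a x z : br z (a *: x) = a *: br z x.
Proof. by rewrite Has brZl -scalerN -Has. Qed.
Lemma brNl x z : br (- x) z = - br x z.
Proof. by rewrite -scaleN1r brZl scaleN1r. Qed.
Lemma brNr x z : br z (- x) = - br z x.
Proof. by rewrite -scaleN1r brZr scaleN1r. Qed.
Lemma brBl x y z : br (x - y) z = br x z - br y z.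
Proof. by rewrite brDl brNl. Qed.
Lemma brBr x y z : br z (x - y) = br z x - br z y.
Proof. by rewrite brDr brNr. Qed.

Lemma GiT : Gi^T = Gi.
Proof. by rewrite trmx_inv HGs. Qed.

Lemma ip_sym u v : ip G u v = ip G v u.
Proof.
rewrite /ip; transitivity ((u *m G *m v^T)^T 0 0); first by rewrite [in RHS]mxE.
by rewrite !trmx_mul trmxK HGs mulmxA.
Qed.

Lemma ip_linl w : linR (fun u => ip G u w).
Proof. by move=> a x y; rewrite /ip !mulmxDl -!scalemxAl !mxE. Qed.
Lemma ip_linr w : linR (fun u => ip G w u).
Proof. by move=> a x y /=; rewrite ip_sym (ip_linl w a x y) !(ip_sym w). Qed.

Lemma ip_e u k : ip G u (e k) = (u *m G) 0 k.
Proof. by rewrite /ip /evec trmx_delta -colE mxE. Qed.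

Lemma ip_ed u k : ip G u (e k *m Gi) = u 0 k.
Proof.
rewrite /ip trmx_mul GiT mulmxA -(mulmxA u) mulmxV // mulmx1 /evec trmx_delta -colE mxE.
by [].
Qed.

Definition bil (f : V -> V -> R) := (forall y, linR (f^~ y)) /\ (forall x, linR (f x)).

Lemma bil_contr f (M N : 'M[R]_n) d : bil f ->
  f (e d *m M) (e d *m N) = \sum_a \sum_b (M d a * N d b) * f (e a) (e b).
Proof.
case=> H1 H2; rewrite (evecM_dec d M) (linR_sum (H1 _)).
apply: eq_bigr => a _; rewrite (evecM_dec d N) (linR_sum (H2 _)) mulr_sumr.
by apply: eq_bigr => b _; rewrite mulrA [M d a * _]mulrC -mulrA.
Qed.


Lemma ipNl (u w : V) : ip G (- u) w = - ip G u w.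
Proof. by rewrite /ip !mulNmx mxE. Qed.
Lemma ipNr (u w : V) : ip G w (- u) = - ip G w u.
Proof. by rewrite ip_sym ipNl ip_sym. Qed.
Lemma ipDl (u v w : V) : ip G (u + v) w = ip G u w + ip G v w.
Proof. by rewrite -{1}(scale1r u) (ip_linl w 1 u v) mul1r. Qed.
Lemma ipBl (u v w : V) : ip G (u - v) w = ip G u w - ip G v w.
Proof. by rewrite ipDl ipNl. Qed.
Lemma ipZl a (u w : V) : ip G (a *: u) w = a * ip G u w.
Proof. by rewrite /ip -!scalemxAl mxE. Qed.

Definition matf (f : V -> V) : 'M[R]_n := \matrix_(i, j) (f (e i)) 0 j.

Lemma matfE f : linV f -> forall x, x *m matf f = f x.
Proof.
move=> Hf x; rewrite {1 2}(row_dec x) mulmx_suml (linV_sum Hf).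
apply: eq_bigr => i _; rewrite -scalemxAl; congr (_ *: _).
by apply/rowP => j; rewrite evecM mxE.
Qed.

Lemma tr_sum (M : 'M[R]_n) : \sum_i (e i *m M) 0 i = \tr M.
Proof. by apply: eq_bigr => i _; rewrite evecM. Qed.

Definition adm (x : V) := matf (br x).

Lemma br_linV x : linV (br x).
Proof. by move=> a y z; rewrite brDr brZr. Qed.

Lemma admE x y : y *m adm x = br x y.
Proof. exact: matfE (br_linV x) y. Qed.

Lemma adm_lin : linV adm.
Proof. by move=> a x y; apply/matrixP => i j; rewrite !mxE Hl !mxE. Qed.

Definition adj (A : 'M[R]_n) := G *m A^T *m Gi.

Lemma adjG (A : 'M[R]_n) : adj A *m G = G *m A^T.
Proof. by rewrite /adj -mulmxA mulVmx // mulmx1. Qed.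

Lemma ip_adj (w z : V) A : ip G (w *m adj A) z = ip G w (z *m A).
Proof. by rewrite /ip -(mulmxA w) adjG trmx_mul !mulmxA. Qed.

Lemma tr_adj (A : 'M[R]_n) : \tr (adj A) = \tr A.
Proof. by rewrite /adj mxtrace_mulC mulmxA mulVmx // mul1mx mxtrace_tr. Qed.

Lemma adjM (P Q : 'M[R]_n) : adj (P *m Q) = adj Q *m adj P.
Proof.
by rewrite /adj trmx_mul !mulmxA -(mulmxA _ Gi G) mulVmx // mulmx1.
Qed.

Lemma tr_adjM (P Q : 'M[R]_n) : \tr (adj P *m Q) = \tr (P *m adj Q).
Proof.
rewrite /adj -mxtrace_tr !trmx_mul !trmxK GiT HGs.
rewrite mxtrace_mulC -!mulmxA mxtrace_mulC -!mulmxA.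
by rewrite mxtrace_mulC -!mulmxA.
Qed.

Lemma adj_lin a (A B : 'M[R]_n) : adj (a *: A + B) = a *: adj A + adj B.
Proof.
by rewrite /adj linearD linearZ /= mulmxDr mulmxDl -scalemxAr -scalemxAl.
Qed.

Definition Jm (z : V) := matf (fun x => z *m adj (adm x)).

Lemma Jf_lin (z : V) : linV (fun x => z *m adj (adm x)).
Proof. by move=> a x y; rewrite adm_lin adj_lin mulmxDr -scalemxAr. Qed.

Lemma JmE (z x : V) : x *m Jm z = z *m adj (adm x).
Proof. exact: matfE (Jf_lin z) x. Qed.

Lemma Jm_lin : linV Jm.
Proof.
move=> a x y; apply/matrixP => i j; rewrite !mxE mulr_sumr -big_split /=.
by apply: eq_bigr => k _; rewrite !mxE mulrDl mulrA.
Qed.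

Lemma JmG (z : V) a b : (Jm z *m G) a b = ip G (br (e a) (e b)) z.
Proof.
rewrite -evecM mulmxA JmE -ip_e ip_adj admE ip_sym //.
Qed.

Lemma adjJ (z : V) : adj (Jm z) = - Jm z.
Proof.
have H : (Jm z *m G)^T = - (Jm z *m G).
  by apply/matrixP => a b; rewrite [LHS]mxE [RHS]mxE !JmG Has ipNl.
rewrite /adj -HGs -trmx_mul H HGs mulNmx mulmxK //.
Qed.

Lemma trJ (z : V) : \tr (Jm z) = 0.
Proof.
have := tr_adj (Jm z); rewrite adjJ raddfN /= => H; lra.
Qed.

Definition NN (z : V) := - (2%:R^-1) *: (adm z + Jm z + adj (adm z)).
Definition MM (y : V) := 2%:R^-1 *: (adm y - adj (adm y) - Jm y).

Lemma nablaE (X Y : V) : nabla br G X Y =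
  2%:R^-1 *: (Y *m adm X - X *m adj (adm Y) - Y *m adj (adm X)).
Proof.
rewrite /nabla; congr (_ *: _).
set W := (Y *m adm X - _ - _).
suff -> : \row_k (ip G (br X Y) (e k) - ip G (br Y (e k)) X
                   + ip G (br (e k) X) Y) = W *m G by rewrite mulmxK.
apply/rowP => k; rewrite mxE -ip_e /W !ipBl !ip_adj !admE.
by rewrite (ip_sym X) (ip_sym Y (br X _)) (Has (e k)) ipNl.
Qed.

Lemma nabla_NN (X Z : V) : nabla br G X Z = X *m NN Z.
Proof.
rewrite nablaE admE Has -admE -(JmE Z X) /NN -scalemxAr scaleNr -scalerN.
by congr (_ *: _); rewrite !mulmxDr !opprD addrAC.
Qed.

Lemma nabla_MM (Y W : V) : nabla br G Y W = W *m MM Y.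
Proof.
rewrite nablaE -JmE /MM -scalemxAr; congr (_ *: _).
by rewrite !mulmxBr addrAC.
Qed.

Lemma curvE (X Y Z : V) : curv br G X Y Z =
  X *m (NN (Y *m NN Z) - NN Z *m MM Y + adm Y *m NN Z).
Proof.
rewrite /curv (nabla_MM Y (nabla br G X Z)) !nabla_NN (Has X) -admE mulNmx mulmxDr mulmxBr !mulmxA.
by rewrite opprK.
Qed.

Lemma MM_NN (Y : V) : MM Y = adm Y + NN Y.
Proof.
rewrite /MM /NN; set a := adm Y; set j := Jm Y; set b := adj a.
by apply/matrixP => i k; rewrite !mxE; field.
Qed.

Lemma ricE (Y Z : V) : ric br G Y Z =
  \tr (NN (Y *m NN Z)) - \tr (NN Z *m NN Y).
Proof.
rewrite /ric; under eq_bigr do rewrite curvE; rewrite tr_sum.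
rewrite !mxtraceD raddfN /= MM_NN mulmxDr mxtraceD (mxtrace_mulC (adm Y)).
by ring.
Qed.

Lemma mx0P (M : 'M[R]_n) : (forall i, e i *m M = 0) -> M = 0.
Proof. by move=> H; apply/matrixP => i j; rewrite -evecM H !mxE. Qed.

Lemma admX x m y : y *m (adm x) ^+ m = foldr br y (nseq m x).
Proof.
elim: m => [|m IH]; first by rewrite expr0 mulmx1.
by rewrite exprSr -mulmxE mulmxA IH admE.
Qed.

Lemma admXY x x' m y :
  y *m (adm x *m adm x') ^+ m = foldr br y (flatten (nseq m [:: x'; x])).
Proof.
elim: m => [|m IH]; first by rewrite expr0 mulmx1.
by rewrite exprSr -mulmxE !mulmxA IH !admE.
Qed.

Lemma size_fl (x x' : V) m : size (flatten (nseq m [:: x'; x])) = (m + m)%N.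
Proof. by elim: m => [|m IH] //=; rewrite IH addnS. Qed.

Lemma nil_traces : lie_nilpotent br ->
  (forall w, \tr (adm w) = 0) /\ (forall x y, \tr (adm x *m adm y) = 0).
Proof.
case=> k Hn.
have Hb xs y : (k <= size xs)%N -> foldr br y xs = 0.
  move=> le; rewrite -(cat_take_drop k xs) foldr_cat; apply: Hn.
  by rewrite size_takel.
split=> [w|x y]; apply: (@tr_nilp _ _ _ k); apply: mx0P => i.
  by rewrite admX Hb // size_nseq.
by rewrite admXY Hb // size_fl leq_addl.
Qed.

Section Nil.
Hypothesis Htr : forall w, \tr (adm w) = 0.
Hypothesis Hk : forall x y, \tr (adm x *m adm y) = 0.

Lemma trNN (w : V) : \tr (NN w) = 0.
Proof. by rewrite /NN mxtraceZ !mxtraceD trJ tr_adj Htr !addr0 mulr0. Qed.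

Definition Phi (x y : V) := \tr (adm x *m adj (adm y)).
Definition Om (x y : V) := \tr (Jm x *m Jm y).

Lemma ricF (Y Z : V) : ric br G Y Z = - 4%:R^-1 * (2%:R * Phi Z Y + Om Z Y).
Proof.
rewrite ricE trNN /NN -scalemxAl -scalemxAr mxtraceZ mxtraceZ.
rewrite !mulmxDl !mulmxDr !mxtraceD Hk.
rewrite (tr_adjM (adm Z) (Jm Y)) adjJ mulmxN raddfN /=.
rewrite -(tr_adjM (Jm Z) (adm Y)) adjJ mulNmx raddfN /=.
rewrite (tr_adjM (adm Z) (adm Y)) -adjM tr_adj Hk /Phi /Om.
by field.
Qed.

Lemma Phi_sym x y : Phi x y = Phi y x.
Proof. by rewrite /Phi -tr_adjM mxtrace_mulC. Qed.

Lemma Phi_bil : bil Phi.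
Proof.
split=> [y|x] a u v; rewrite /Phi adm_lin.
  by rewrite mulmxDl -scalemxAl mxtraceD mxtraceZ.
by rewrite adj_lin mulmxDr -scalemxAr mxtraceD mxtraceZ.
Qed.

Lemma Om_bil : bil Om.
Proof.
split=> [y|x] a u v; rewrite /Om Jm_lin.
  by rewrite mulmxDl -scalemxAl mxtraceD mxtraceZ.
by rewrite mulmxDr -scalemxAr mxtraceD mxtraceZ.
Qed.

Lemma PhiE x y : Phi x y = \sum_i ip G (br x (e i)) (br y (e i *m Gi)).
Proof.
rewrite /Phi -tr_sum; apply: eq_bigr => i _.
by rewrite -ip_ed mulmxA ip_adj !admE.
Qed.

Lemma JmE2 (z : V) i j : Jm z i j = ip G (br (e i) (e j *m Gi)) z.
Proof.
by rewrite -evecM JmE -ip_ed ip_adj admE ip_sym.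
Qed.

Lemma OmE x y : Om x y = \sum_i \sum_j
  ip G (br (e i) (e j *m Gi)) x * ip G (br (e j) (e i *m Gi)) y.
Proof.
rewrite /Om /mxtrace; apply: eq_bigr => i _; rewrite mxE.
by apply: eq_bigr => j _; rewrite !JmE2.
Qed.

End Nil.

Lemma contr_sum f (M N : 'M[R]_n) : bil f ->
  \sum_d f (e d *m M) (e d *m N) = \sum_a \sum_b (M^T *m N) a b * f (e a) (e b).
Proof.
move=> Hf; under eq_bigr do rewrite bil_contr //.
rewrite exchange_big; apply: eq_bigr => a _.
rewrite exchange_big; apply: eq_bigr => b _.
rewrite mxE mulr_suml; apply: eq_bigr => d _.
by rewrite mxE.
Qed.

Lemma dual_swap f : bil f ->
  \sum_j f (e j *m Gi) (e j) = \sum_j f (e j) (e j *m Gi).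
Proof.
move=> Hf.
transitivity (\sum_j f (e j *m Gi) (e j *m 1%:M)).
  by apply: eq_bigr => j _; rewrite mulmx1.
transitivity (\sum_j f (e j *m 1%:M) (e j *m Gi)).
  by rewrite !contr_sum // GiT trmx1 mulmx1 mul1mx.
by apply: eq_bigr => j _; rewrite mulmx1.
Qed.

Lemma contrD (w v : V) (D : 'M[R]_n) :
  \sum_d w 0 d * ip G v (e d *m D) = ip G (w *m D) v.
Proof.
rewrite {2}(row_dec w) mulmx_suml.
transitivity (ip G (\sum_d w 0 d *: (e d *m D)) v).
  rewrite (linR_sum (ip_linl v)); apply: eq_bigr => d _; by rewrite ip_sym.
by congr (ip G _ v); apply: eq_bigr => d _; rewrite scalemxAl.
Qed.

Section Der.
Hypothesis Htr : forall w, \tr (adm w) = 0.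
Hypothesis Hk : forall x y, \tr (adm x *m adm y) = 0.
Variable D : 'M[R]_n.
Hypothesis HD : forall x y, br x y *m D = br (x *m D) y + br x (y *m D).

Definition Q1 := \sum_d Phi (e d *m D) (e d *m Gi).
Definition Q2 := \sum_i \sum_j ip G (br (e i) (e j) *m D) (br (e i *m Gi) (e j *m Gi)).

Lemma SPhi : \sum_b \sum_a (Gi *m D) b a * Phi (e b) (e a) = Q1.
Proof.
rewrite /Q1; under [RHS]eq_bigr do rewrite Phi_sym.
by rewrite (contr_sum _ _ Phi_bil) GiT.
Qed.

Lemma SOm : \sum_b \sum_a (Gi *m D) b a * Om (e b) (e a) = - Q2.
Proof.
have := contr_sum Gi D Om_bil; rewrite GiT => <-.
under eq_bigr do rewrite OmE.
under eq_bigr do under eq_bigr do under eq_bigr do rewrite ip_ed.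
rewrite exchange_big; under eq_bigr do rewrite exchange_big.
under eq_bigr do under eq_bigr do rewrite contrD.
rewrite /Q2 -sumrN; apply: eq_bigr => i _; rewrite -sumrN.
pose f := fun x y => ip G (br (e i) y *m D) (br x (e i *m Gi)).
have Hf : bil f.
  split=> [y|x] a u v; rewrite /f.
    by rewrite Hl (ip_linr _ a).
  by rewrite brDr brZr mulmxDl -scalemxAl (ip_linl _ a).
transitivity (\sum_j f (e j) (e j *m Gi)); first by [].
rewrite -dual_swap //; apply: eq_bigr => j _.
by rewrite /f (Has (e j *m Gi)) ipNr.
Qed.

Lemma Q2E : Q2 = 2%:R * Q1.
Proof.
rewrite /Q2; under eq_bigr do under eq_bigr do rewrite HD ipDl.
under eq_bigr do rewrite big_split /=.
rewrite big_split /= mulr2n mulrDl mul1r.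
have E : \sum_i \sum_j ip G (br (e i *m D) (e j)) (br (e i *m Gi) (e j *m Gi)) = Q1.
  by rewrite /Q1; apply: eq_bigr => i _; rewrite PhiE.
congr (_ + _) => //.
rewrite exchange_big -E; apply: eq_bigr => i _; apply: eq_bigr => j _.
by rewrite Has (Has (e j *m Gi)) ipNl ipNr opprK.
Qed.

Lemma trRicD : \tr (ricci_op br G *m D) = 0.
Proof.
rewrite /ricci_op -mulmxA /mxtrace.
under eq_bigr do rewrite mxE.
under eq_bigr do under eq_bigr do rewrite mxE ricF //.
rewrite exchange_big.
transitivity (- 4%:R^-1 * (2%:R * \sum_b \sum_a (Gi *m D) b a * Phi (e b) (e a)
                        + \sum_b \sum_a (Gi *m D) b a * Om (e b) (e a))).
  rewrite mulrDr mulrA !big_distrr -big_split /=; apply: eq_bigr => b _.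
  rewrite !big_distrr -big_split /=; apply: eq_bigr => a _.
  by ring.
by rewrite SPhi SOm Q2E; ring.
Qed.

End Der.

End Main.

Theorem corollary2p2 (R : realType) (n : nat) (br : 'rV[R]_n -> 'rV[R]_n -> 'rV[R]_n)
    (G : 'M[R]_n) (lambda : R) (D : 'M[R]_n) :
  is_lie_bracket br -> lie_nilpotent br -> is_metric G ->
  is_derivation br D ->
  ricci_op br G = lambda%:M + D ->
  \tr (D *m D) = - lambda * \tr D /\
  \tr (ricci_op br G *m ricci_op br G) = lambda * \tr (ricci_op br G).
Proof.
case=> Hl Has _ Hnil [HGs HGu] HD Hric.
have [Htr Hk] := nil_traces Hl Has Hnil.
have H0 := trRicD Hl Has HGs HGu Htr Hk HD.
split.
  move: H0; rewrite Hric mulmxDl mul_scalar_mx mxtraceD mxtraceZ => H0; lra.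
by rewrite {2}Hric mulmxDr mul_mx_scalar mxtraceD mxtraceZ H0 addr0.
Qed.
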